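(* For positive integers $a\ge b$ and odd $k\ge3$, $$\delta_k\binom{ap}{bp}^{\mathfrak a}=-\frac{T^k}{k}\big[a^k-b^k-(a-b)^k\big]\binom{ap}{bp}^{\mathfrak a}.$$
   Context: $\mathcal M^{(1)}=\mathbb Q[\zeta^{\mathfrak a}(3),\zeta^{\mathfrak a}(5),\dots]$ is the free polynomial subalgebra of depth-one motivic MZVs in $\mathcal A=\mathcal H/\zeta^{\mathfrak m}(2)\mathcal H$; $\zeta^{\mathfrak a}(k)=0$ for even $k$. For odd $k\ge3$, $\delta_k$ is the continuous $\mathbb Q((T))$-linear derivation $\partial/\partial\zeta^{\mathfrak a}(k)$ of $\mathcal M^{(1)}((T))$. $H^{\mathfrak a}(n)=(-1)^n\sum_{j\ge1}\binom{n+j-1}{n-1}\zeta^{\mathfrak a}(n+j)T^j$; $H^{\mathfrak a}(1^0)=1$, $H^{\mathfrak a}(1^n)=\frac1n\sum_{i=1}^n(-1)^{i-1}H^{\mathfrak a}(i)H^{\mathfrak a}(1^{n-i})$; $c_n^{\mathfrak a}=n\sum_{j\ge0}(n-1)^jT^jH^{\mathfrak a}(1^j)$ for $n\ge1$; and $\binom{ap}{bp}^{\mathfrak a}=\dfrac{c^{\mathfrak a}_a\cdots c^{\mathfrak a}_{a-b+1}}{c^{\mathfrak a}_b\cdots c^{\mathfrak a}_1}$. *)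

(* Defs.v *)
From HB Require Import structures.
From mathcomp Require Import all_boot all_order all_algebra.
Set Implicit Arguments. Unset Strict Implicit. Unset Printing Implicit Defensive.
Import Order.TTheory GRing.Theory Num.Theory.
Local Open Scope ring_scope.

(* Formal power series in T over a commutative Q-algebra R, as coefficient
   functions: f n = coefficient of T^n. *)
Section PowerSeries.
Variable R : comUnitAlgType rat.

Definition ps := nat -> R.

Definition ps1 : ps := fun n => if n == 0%N then 1 else 0.

Definition psmul (f g : ps) : ps := fun n => \sum_(i < n.+1) f i * g (n - i)%N.

Definition psshift (k : nat) (f : ps) : ps :=
  fun n => if (k <= n)%N then f (n - k)%N else 0.

Definition psscale (c : rat) (f : ps) : ps := fun n => c *: f n.

(* coefficientwise application (continuous Q((T))-linear extension) *)
Definition psmap (d : R -> R) (f : ps) : ps := fun n => d (f n).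

(* first n+1 coefficients of the inverse of f (f 0 assumed a unit) *)
Fixpoint psinv_seq (f : ps) (n : nat) : seq R :=
  match n with
  | 0 => [:: (f 0%N)^-1]
  | n'.+1 =>
      let s := psinv_seq f n' in
      rcons s (- (f 0%N)^-1 *
               \sum_(i < n.+1 | (0 < i)%N) f i * nth 0 s (n - i)%N)
  end.

Definition psinv (f : ps) : ps := fun n => nth 0 (psinv_seq f n) n.

Definition psprod (s : seq ps) : ps := foldr psmul ps1 s.

(* z n plays the role of zeta^a(n) *)
Variable z : nat -> R.

Definition Ha (n : nat) : ps :=
  fun j => if j == 0%N then 0
           else (-1) ^+ n * ('C(n + j - 1, n - 1))%:R * z (n + j)%N.

(* [:: H^a(1^0); ...; H^a(1^n)] *)
Fixpoint H1seq (n : nat) : seq ps :=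
  match n with
  | 0 => [:: ps1]
  | n'.+1 =>
      let s := H1seq n' in
      rcons s (psscale ((n%:R : rat)^-1)
                 (fun m => \sum_(i < n.+1 | (0 < i)%N)
                             (-1) ^+ (i - 1) * psmul (Ha i) (nth ps1 s (n - i)%N) m))
  end.

Definition H1 (n : nat) : ps := nth ps1 (H1seq n) n.

Definition ca (n : nat) : ps :=
  fun m => n%:R * \sum_(j < m.+1) ((n - 1) ^ j)%:R * H1 j (m - j)%N.

Definition binoma (a b : nat) : ps :=
  psmul (psprod (map ca (iota (a - b).+1 b)))
        (psinv (psprod (map ca (iota 1 b)))).

End PowerSeries.

(* Main.v *)
Require Import Defs.
From HB Require Import structures.
From mathcomp Require Import all_boot all_order all_algebra.
From mathcomp Require Import boolp.
From mathcomp Require Import ring zify.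
Import GRing.Theory Num.Theory.
Local Open Scope ring_scope.

Section FPS.
Variable R : comUnitAlgType rat.
Local Notation fps := (ps R).
HB.instance Definition _ := gen_eqMixin fps.
HB.instance Definition _ := gen_choiceMixin fps.

Definition fadd (f g : fps) : fps := fun n => f n + g n.
Definition fopp (f : fps) : fps := fun n => - f n.
Definition fzero : fps := fun _ => 0.

Fact faddA : associative fadd.
Proof. by move=> f g h; apply: funext => n; rewrite /fadd addrA. Qed.
Fact faddC : commutative fadd.
Proof. by move=> f g; apply: funext => n; rewrite /fadd addrC. Qed.
Fact fadd0 : left_id fzero fadd.
Proof. by move=> f; apply: funext => n; rewrite /fadd add0r. Qed.
Fact faddN : left_inverse fzero fopp fadd.
Proof. by move=> f; apply: funext => n; rewrite /fadd /fopp addNr. Qed.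
HB.instance Definition _ := GRing.isZmodule.Build fps faddA faddC fadd0 faddN.

Definition fmul (f g : fps) : fps := psmul f g.

Lemma psmul_rev (f g : fps) n : psmul f g n = \sum_(j < n.+1) f (n - j)%N * g j.
Proof.
rewrite /psmul (reindex_inj rev_ord_inj) /=; apply: eq_bigr => j _.
by rewrite subKn // -ltnS.
Qed.

Fact fmulA : associative fmul.
Proof.
move=> p q r; apply: funext => i; rewrite /fmul [in RHS]psmul_rev.
change (\sum_(j < i.+1) p j * psmul q r (i - j)%N = \sum_(j < i.+1) psmul p q (i - j)%N * r j).
pose coef3 j k := p j * (q (i - j - k)%N * r k).
transitivity (\sum_(j < i.+1) \sum_(k < i.+1 | (k <= i - j)%N) coef3 j k).
  apply: eq_bigr => /= j _; rewrite psmul_rev big_distrr /=.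
  by rewrite (big_ord_narrow_leq (leq_subr _ _)).
rewrite (exchange_big_dep predT) //=; apply: eq_bigr => k _.
transitivity (\sum_(j < i.+1 | (j <= i - k)%N) coef3 j k).
  apply: eq_bigl => j; rewrite -ltnS -(ltnS j) -!subSn ?leq_ord //.
  by rewrite -subn_gt0 -(subn_gt0 j) -!subnDA addnC.
rewrite (big_ord_narrow_leq (leq_subr _ _)) [psmul p q _]/psmul big_distrl /=.
by apply: eq_bigr => j _; rewrite /coef3 -!subnDA addnC mulrA.
Qed.

Fact fmulC : commutative fmul.
Proof.
move=> f g; apply: funext => n; rewrite /fmul psmul_rev /psmul.
by apply: eq_bigr => j _; rewrite mulrC.
Qed.

Fact fmul1 : left_id (ps1 R : fps) fmul.
Proof.
move=> f; apply: funext => n; rewrite /fmul /psmul big_ord_recl /= /ps1 /=.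
rewrite mul1r subn0 big1 ?addr0 // => i _.
by rewrite /bump /= mul0r.
Qed.

Fact fmulDl : left_distributive fmul (+%R : fps -> fps -> fps).
Proof.
move=> f g h; apply: funext => n; rewrite /fmul /psmul.
change (\sum_(i < n.+1) (f i + g i) * h (n - i)%N = \sum_(i < n.+1) f i * h (n - i)%N + \sum_(i < n.+1) g i * h (n - i)%N).
by rewrite -big_split /=; apply: eq_bigr => i _; rewrite mulrDl.
Qed.

Fact fone_neq0 : (ps1 R : fps) != 0.
Proof.
apply/eqP => /(congr1 (fun f : fps => f 0%N)); rewrite /ps1 /=.
by move/eqP; rewrite oner_eq0.
Qed.

HB.instance Definition _ := GRing.Zmodule_isComNzRing.Build fps fmulA fmulC fmul1 fmulDl fone_neq0.

Lemma fps_mulE (f g : fps) : f * g = psmul f g. Proof. by []. Qed.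
Lemma fps_addE (f g : fps) n : (f + g) n = f n + g n. Proof. by []. Qed.
Lemma fps_oppE (f : fps) n : (- f) n = - f n. Proof. by []. Qed.
Lemma fps_0E n : (0 : fps) n = 0. Proof. by []. Qed.
Lemma fps_1E : (1 : fps) = ps1 R. Proof. by []. Qed.


Lemma fps_sumE I (r : seq I) (P : pred I) (F : I -> fps) m :
  (\sum_(i <- r | P i) F i) m = \sum_(i <- r | P i) F i m.
Proof. by apply: (big_morph (fun f : fps => f m)). Qed.

Definition cst (r : R) : fps := fun n => if n == 0%N then r else 0.

Lemma cst_mulE r (f : fps) m : (cst r * f) m = r * f m.
Proof.
rewrite fps_mulE /psmul big_ord_recl /= subn0 big1 ?addr0 // => i _.
by rewrite /cst /= mul0r.
Qed.

Lemma mulE0 (f g : fps) : (f * g) 0%N = f 0%N * g 0%N.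
Proof. by rewrite fps_mulE /psmul big_ord1. Qed.

Lemma cstM r s : cst (r * s) = cst r * cst s.
Proof. apply: funext => m; rewrite cst_mulE /cst; case: (m == 0%N); rewrite ?mulr0 //. Qed.
Lemma cstD r s : cst (r + s) = cst r + cst s.
Proof. apply: funext => m; rewrite fps_addE /cst; case: (m == 0%N); rewrite ?addr0 //. Qed.
Lemma cstN r : cst (- r) = - cst r.
Proof. apply: funext => m; rewrite fps_oppE /cst; case: (m == 0%N); rewrite ?oppr0 //. Qed.
Lemma cst1 : cst 1 = 1.
Proof. by []. Qed.
Lemma cst0 : cst 0 = 0.
Proof. by apply: funext => m; rewrite /cst; case: (m == 0%N). Qed.
Lemma cstX r n : cst (r ^+ n) = cst r ^+ n.
Proof. elim: n => [|n IH]; first by rewrite !expr0. by rewrite !exprS cstM IH. Qed.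
Lemma cst_nat n : cst n%:R = n%:R.
Proof. elim: n => [|n IH]; first by rewrite cst0. by rewrite -addn1 !natrD cstD IH. Qed.

Definition Tk (j : nat) : fps := psshift j (ps1 R).

Lemma TkE j m : Tk j m = if m == j then 1 else 0.
Proof.
rewrite /Tk /psshift /ps1; case: (ltngtP m j) => h //.
- by rewrite subn_eq0 leqNgt h.
- by rewrite h subnn.
Qed.

Lemma Tk_mulE j (f : fps) m : (Tk j * f) m = if (j <= m)%N then f (m - j)%N else 0.
Proof.
rewrite fps_mulE /psmul; case: ifP => hj.
- have hj' : (j < m.+1)%N by [].
  rewrite (bigD1 (Ordinal hj')) //= TkE eqxx mul1r big1 ?addr0 // => i hi.
  rewrite TkE; case: eqP => [e|]; last by rewrite mul0r.
  by move: hi; rewrite -val_eqE /= e eqxx.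
- rewrite big1 // => i _; rewrite TkE; case: eqP => [e|]; last by rewrite mul0r.
  by move: (ltn_ord i); rewrite e ltnS hj.
Qed.

Lemma psshiftE j (f : ps R) : psshift j f = Tk j * (f : fps).
Proof. by apply: funext => m; rewrite Tk_mulE. Qed.

Lemma TkD i j : Tk (i + j) = Tk i * Tk j.
Proof.
apply: funext => m; rewrite Tk_mulE !TkE; case: (leqP i m) => h.
- have -> : (m == i + j)%N = (m - i == j)%N by apply/eqP/eqP; lia.
  by [].
- have -> : (m == i + j)%N = false by apply/eqP; lia.
  by [].
Qed.

Lemma Tk0 : Tk 0 = 1.
Proof. by apply: funext => m; rewrite TkE /= fps_1E /ps1. Qed.

Lemma psscaleE c (f : ps R) : psscale c f = cst (c%:A) * (f : fps).
Proof. by apply: funext => m; rewrite cst_mulE /psscale mulr_algl. Qed.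

Lemma psprodE (s : seq (ps R)) : psprod s = \prod_(f <- s) (f : fps).
Proof. elim: s => [|f s IH]; first by rewrite big_nil. by rewrite big_cons /= -IH. Qed.

Lemma size_psinv_seq (f : ps R) n : size (psinv_seq f n) = n.+1.
Proof. by elim: n => [|n IH] //=; rewrite size_rcons IH. Qed.

Lemma nth_psinv_seq (f : ps R) n i : (i <= n)%N -> nth 0 (psinv_seq f n) i = psinv f i.
Proof.
elim: n => [|n IH]; first by rewrite leqn0 => /eqP ->.
rewrite leq_eqVlt => /orP [/eqP -> //| hi].
by rewrite /= nth_rcons size_psinv_seq hi IH.
Qed.

Lemma psinvS (f : ps R) n : psinv f n.+1 =
  - (f 0%N)^-1 * \sum_(i < n.+2 | (0 < i)%N) f i * psinv f (n.+1 - i)%N.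
Proof.
rewrite /psinv /= nth_rcons size_psinv_seq ltnn eqxx; congr (_ * _).
apply: eq_bigr => i hi; rewrite nth_psinv_seq //.
by move: hi; case: i => [[|i]] //= _ _; rewrite subSS leq_subr.
Qed.

Lemma psinvP (f : ps R) : f 0%N \is a GRing.unit -> (f : fps) * psinv f = 1.
Proof.
move=> hu; apply: funext => m; rewrite fps_mulE /psmul fps_1E /ps1.
case: m => [|m].
  by rewrite big_ord1 /= /psinv /= mulrV.
rewrite big_ord_recl /= subn0 psinvS mulrA mulrN mulrV // mulN1r.
rewrite (big_mkcond (fun i : 'I_m.+2 => (0 < i)%N)) big_ord_recl /= add0r.
by rewrite addNr.
Qed.

Lemma unit_alg (c : rat) : c != 0 -> (c%:A : R) \is a GRing.unit.
Proof.
move=> hc; apply/unitrP; exists (c^-1)%:A.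
by split; rewrite mulr_algl scalerA ?mulVf ?mulfV // scale1r.
Qed.

Lemma unit_nat n : (0 < n)%N -> (n%:R : R) \is a GRing.unit.
Proof.
move=> hn; have -> : (n%:R : R) = (n%:R : rat)%:A by rewrite scaler_nat.
by apply: unit_alg; rewrite pnatr_eq0 -lt0n.
Qed.

Lemma prod0E (s : seq nat) (F : nat -> fps) :
  (\prod_(n <- s) F n) 0%N = \prod_(n <- s) F n 0%N.
Proof. elim: s => [|x s IH]; first by rewrite !big_nil. by rewrite !big_cons mulE0 IH. Qed.

Lemma unit_prod (s : seq nat) (F : nat -> R) :
  (forall n, n \in s -> F n \is a GRing.unit) -> \prod_(n <- s) F n \is a GRing.unit.
Proof.
elim: s => [|x s IH] h; first by rewrite big_nil unitr1.
rewrite big_cons unitrM h ?mem_head // IH // => n hn.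
by apply: h; rewrite in_cons hn orbT.
Qed.


Lemma sum_cut (V : nmodType) (F : nat -> V) a b : (a <= b)%N ->
  (forall i, (a <= i)%N -> (i < b)%N -> F i = 0) -> \sum_(i < a) F i = \sum_(i < b) F i.
Proof.
move=> hab h; rewrite (big_ord_widen b F hab) big_mkcond; apply: eq_bigr => i _.
by case: ltnP => // hi; rewrite h.
Qed.

Lemma sum_widen_cond (V : nmodType) (F : nat -> V) (P : pred nat) a N : (a <= N)%N ->
  \sum_(i < a | P i) F i = \sum_(i < N) (if P i && (i < a)%N then F i else 0).
Proof.
move=> h; rewrite big_mkcond (big_ord_widen N (fun i => if P i then F i else 0) h) big_mkcond.
by apply: eq_bigr => i _; case: (P i); case: (i < a)%N.
Qed.

Lemma sum_shift (V : nmodType) (f : nat -> V) i m : (i <= m)%N ->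
  \sum_(jj < m.+1) (if (i <= jj)%N then f (jj - i)%N else 0) = \sum_(l < (m - i).+1) f l.
Proof.
move=> him; rewrite -(big_mkord xpredT (fun jj => if (i <= jj)%N then f (jj - i)%N else 0)) -(big_mkord xpredT f) (@big_cat_nat _ _ _ i) //=; last lia.
rewrite big1_seq ?add0r; last first.
  move=> jj /andP [_]; rewrite mem_index_iota => /andP [_ h]; by rewrite leqNgt h.
rewrite -{1}[i]add0n big_addn subSn //; apply: eq_big_nat => l _.
by rewrite leq_addl addnK.
Qed.


Lemma tele (K : rat) (p : nat) m b :
  \sum_(n <- iota m.+1 b) (- (K * ((n%:R : rat) ^+ p - 1 - (((n - 1)%N)%:R) ^+ p))) =
  - (K * (((m + b)%N%:R : rat) ^+ p - (m%:R) ^+ p - b%:R)).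
Proof.
elim: b m => [|b IH] m.
  by rewrite big_nil addn0 subrr sub0r oppr0 mulr0 oppr0.
rewrite /= big_cons IH subn1 /= addSnnS -natr1; ring.
Qed.

Section Deriv.
Variable d : R -> R.
Hypothesis hdD : forall x y : R, d (x + y) = d x + d y.
Hypothesis hdM : forall x y : R, d (x * y) = d x * y + x * d y.

Lemma d0 : d 0 = 0.
Proof. have h := hdD 0 0; rewrite addr0 in h; by apply: (addrI (d 0)); rewrite -h addr0. Qed.
Lemma d1 : d 1 = 0.
Proof. have h := hdM 1 1; rewrite !mulr1 mul1r in h; by apply: (addrI (d 1)); rewrite -h addr0. Qed.
Lemma dN x : d (- x) = - d x.
Proof. by apply: (addrI (d x)); rewrite -hdD !subrr d0. Qed.
Lemma dnat n : d n%:R = 0.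
Proof. elim: n => [|n IH]; first exact: d0. by rewrite -addn1 natrD hdD IH d1 addr0. Qed.
Lemma dcM c x : d c = 0 -> d (c * x) = c * d x.
Proof. by move=> h; rewrite hdM h mul0r add0r. Qed.
Lemma dsum I (r : seq I) (P : pred I) (F : I -> R) :
  d (\sum_(i <- r | P i) F i) = \sum_(i <- r | P i) d (F i).
Proof. exact: (big_morph d hdD d0). Qed.
Lemma dsign n : d ((-1) ^+ n) = 0.
Proof. elim: n => [|n IH]; first by rewrite expr0 d1. by rewrite exprS hdM IH dN d1 oppr0 mul0r mulr0 addr0. Qed.

Definition D (f : fps) : fps := psmap d f.

Lemma DD f g : D (f + g) = D f + D g.
Proof. by apply: funext => m; rewrite /D /psmap !fps_addE hdD. Qed.
Lemma D0 : D 0 = 0.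
Proof. by apply: funext => m; rewrite /D /psmap fps_0E d0. Qed.
Lemma DN f : D (- f) = - D f.
Proof. by apply: funext => m; rewrite /D /psmap !fps_oppE dN. Qed.
Lemma DM f g : D (f * g) = D f * g + f * D g.
Proof.
apply: funext => m; rewrite /D /psmap fps_addE !fps_mulE /psmul dsum -big_split /=.
by apply: eq_bigr => i _; rewrite hdM.
Qed.
Lemma Dsum I (r : seq I) (P : pred I) (F : I -> fps) :
  D (\sum_(i <- r | P i) F i) = \sum_(i <- r | P i) D (F i).
Proof. exact: (big_morph D DD D0). Qed.
Lemma Dcst r : D (cst r) = cst (d r).
Proof. by apply: funext => m; rewrite /D /psmap /cst; case: (m == 0%N); rewrite ?d0. Qed.
Lemma DTk j : D (Tk j) = 0.
Proof. by apply: funext => m; rewrite /D /psmap TkE; case: (m == j); rewrite ?d1 ?d0. Qed.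
Lemma D1 : D 1 = 0.
Proof. by rewrite -cst1 Dcst d1 cst0. Qed.
Lemma DcM c f : d c = 0 -> D (cst c * f) = cst c * D f.
Proof. by move=> h; rewrite DM Dcst h cst0 mul0r add0r. Qed.

Lemma D_prod (s : seq nat) (F e : nat -> fps) :
  (forall n, n \in s -> D (F n) = e n * F n) ->
  D (\prod_(n <- s) F n) = (\sum_(n <- s) e n) * \prod_(n <- s) F n.
Proof.
elim: s => [|x s IH] h; first by rewrite !big_nil D1 mul0r.
rewrite !big_cons DM h ?mem_head // IH; last by move=> n hn; apply: h; rewrite in_cons hn orbT.
ring.
Qed.

Lemma D_inv (f g e : fps) : f * g = 1 -> D f = e * f -> D g = - e * g.
Proof.
move=> hfg hf.
have h0 : D (f * g) = 0 by rewrite hfg D1.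
rewrite DM hf in h0.
have : g * (e * f * g + f * D g) = 0 by rewrite h0 mulr0.
have -> : g * (e * f * g + f * D g) = (f * g) * (e * g + D g) by ring.
rewrite hfg mul1r => /eqP; rewrite addrC addr_eq0 => /eqP ->; ring.
Qed.


Lemma tri_form (G : nat -> nat -> fps) j :
  \sum_(i < j.+1 | (0 < i)%N) \sum_(l < (j - i).+1 | (0 < l)%N) G i l =
  \sum_(i < j.+1) \sum_(l < j.+1) (if [&& (0 < i)%N, (0 < l)%N & (i + l <= j)%N] then G i l else 0).
Proof.
rewrite big_mkcond; apply: eq_bigr => i _.
case: (posnP i) => [->|hi] /=; first by rewrite big1.
rewrite big_mkcond (big_ord_widen j.+1 (fun l => if (0 < l)%N then G i l else 0) (leq_subr i j : (j - i).+1 <= j.+1)%N).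
rewrite big_mkcond; apply: eq_bigr => l _.
have hi' : (i <= j)%N by rewrite -ltnS.
rewrite ltnS leq_subRL //; by case: (0 < l)%N; case: (i + l <= j)%N.
Qed.

Lemma tri_exchange (G : nat -> nat -> fps) j :
  \sum_(i < j.+1 | (0 < i)%N) \sum_(l < (j - i).+1 | (0 < l)%N) G i l =
  \sum_(l < j.+1 | (0 < l)%N) \sum_(i < (j - l).+1 | (0 < i)%N) G i l.
Proof.
rewrite tri_form (tri_form (fun l i => G i l)) exchange_big /=.
apply: eq_bigr => l _; apply: eq_bigr => i _.
by rewrite addnC; case: (0 < i)%N; case: (0 < l)%N.
Qed.


Variable z : nat -> R.
Variable k : nat.
Hypothesis hz_even : forall n, ~~ odd n -> z n = 0.
Hypothesis hdz : forall m, odd m -> (3 <= m)%N -> d (z m) = if m == k then 1 else 0.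
Hypothesis hk : odd k.
Hypothesis hk3 : (3 <= k)%N.

Lemma size_H1seq n : size (H1seq z n) = n.+1.
Proof. by elim: n => [|n IH] //=; rewrite size_rcons IH. Qed.

Lemma nth_H1seq n i : (i <= n)%N -> nth (ps1 R) (H1seq z n) i = H1 z i.
Proof.
elim: n => [|n IH]; first by rewrite leqn0 => /eqP ->.
rewrite leq_eqVlt => /orP [/eqP -> //| hi].
by rewrite /= nth_rcons size_H1seq hi IH.
Qed.

Lemma H1S j : H1 z j.+1 = psscale ((j.+1)%:R^-1)
  (fun m => \sum_(i < j.+2 | (0 < i)%N) (-1) ^+ (i - 1) * psmul (Ha z i) (H1 z (j.+1 - i)) m).
Proof.
rewrite /H1 /= nth_rcons size_H1seq ltnn eqxx; congr psscale.
apply: funext => m; apply: eq_bigr => i hi; rewrite nth_H1seq //.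
by move: hi; case: i => [[|i]] //= _ _; rewrite subSS leq_subr.
Qed.

Lemma H10 : H1 z 0 = 1.
Proof. by []. Qed.

Lemma nat_inv n : (0 < n)%N -> cst (((n%:R : rat)^-1)%:A) * (n%:R : fps) = 1.
Proof.
move=> hn; rewrite -cst_nat -cstM.
have -> : (n%:R : R) = (n%:R : rat)%:A by rewrite scaler_nat.
by rewrite mulr_algl scalerA mulVf ?scale1r // pnatr_eq0 -lt0n.
Qed.

Lemma Newton j : (j%:R : fps) * H1 z j =
  \sum_(i < j.+1 | (0 < i)%N) cst ((-1) ^+ (i - 1)) * (Ha z i * H1 z (j - i)).
Proof.
case: j => [|j].
  by rewrite mul0r big1 // => -[[|i] hi].
rewrite H1S psscaleE mulrA -cst_nat -cstM.
have -> : ((j.+1)%:R : R) = ((j.+1)%:R : rat)%:A by rewrite scaler_nat.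
rewrite mulr_algl scalerA mulfV ?pnatr_eq0 // scale1r cst1 mul1r.
apply: funext => m; rewrite fps_sumE; apply: eq_bigr => i _.
by rewrite cst_mulE.
Qed.

Lemma dz m : (2 <= m)%N -> d (z m) = if m == k then 1 else 0.
Proof.
move=> hm; case ho: (odd m).
  apply: hdz => //; move: hm; rewrite leq_eqVlt => /orP [/eqP e|//].
  by rewrite -e in ho.
rewrite hz_even ?ho // d0; case: eqP => // e.
by move: hk; rewrite -e ho.
Qed.

Lemma DHa i : (0 < i)%N -> D (Ha z i) =
  if (i < k)%N then cst ((-1) ^+ i * ('C(k.-1, i.-1))%:R) * Tk (k - i) else 0.
Proof.
move=> hi; apply: funext => m; rewrite /D /psmap /Ha.
case: (m =P 0%N) => [->|hm] /=.
  rewrite d0; case: ifP => // hik; rewrite cst_mulE TkE.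
  by rewrite (_ : (0 == k - i)%N = false) ?mulr0 //; apply/eqP; lia.
rewrite !dcM ?dz; [|lia|by rewrite dnat mulr0|exact: dsign].
case: (ltnP i k) => hik.
  rewrite cst_mulE TkE.
  have -> : (i + m == k)%N = (m == k - i)%N by apply/eqP/eqP; lia.
  case: eqP => [e|]; last by rewrite !mulr0.
  rewrite !mulr1; congr (_ * _%:R); congr binomial; lia.
rewrite fps_0E; case: eqP => [e|]; [lia | by rewrite mulr0].
Qed.

Definition beta (i : nat) : fps :=
  if (i < k)%N then cst ((- ((k%:R : rat)^-1 * ('C(k, i))%:R))%:A) * Tk (k - i) else 0.

Lemma sign_DHa i : (0 < i)%N -> cst ((-1) ^+ (i - 1)) * D (Ha z i) = i%:R * beta i.
Proof.
move=> hi; rewrite DHa // /beta; case: ifP => hik; last by rewrite !mulr0.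
rewrite mulrA -cstM -cst_nat mulrA -cstM; congr (cst _ * _).
case: i hi hik => [|i] // _ hik.
have sg : ((-1) ^+ i * (-1) ^+ i : R) = 1 by rewrite -exprD addnn -mul2n exprM sqrrN !expr1n.
rewrite subn1 /= mulrA exprS mulrCA sg mulr1 mulN1r.
have hb := mul_bin_diag k i.
have hk0 : (k%:R : rat) != 0 by rewrite pnatr_eq0; lia.
have heq : ((i.+1)%:R * ((k%:R)^-1 * ('C(k, i.+1))%:R) : rat) = ('C(k.-1, i))%:R.
  by rewrite mulrCA -natrM -hb natrM mulKf.
have -> : ((i.+1)%:R : R) = ((i.+1)%:R : rat)%:A by rewrite scaler_nat.
by rewrite mulr_algl scalerA mulrN heq scaleNr scaler_nat.
Qed.


Lemma DH1 j : D (H1 z j) = \sum_(i < j.+1 | (0 < i)%N) beta i * H1 z (j - i).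
Proof.
elim/ltn_ind: j => j IH.
case: j IH => [|j] IH.
  by rewrite H10 D1 big1 // => -[[|i] hi].
have key : ((j.+1)%:R : fps) * D (H1 z j.+1) =
    (j.+1)%:R * \sum_(i < j.+2 | (0 < i)%N) beta i * H1 z (j.+1 - i).
  rewrite -cst_nat -DcM ?dnat // cst_nat Newton Dsum.
  have e1 : forall i : 'I_j.+2, (0 < i)%N ->
      D (cst ((-1) ^+ (i - 1)) * (Ha z i * H1 z (j.+1 - i))) =
      i%:R * beta i * H1 z (j.+1 - i) + cst ((-1) ^+ (i - 1)) * (Ha z i * D (H1 z (j.+1 - i))).
    move=> i hi; rewrite DcM ?dsign // DM mulrDr mulrA sign_DHa //.
  rewrite (eq_bigr _ e1) big_split /=.
  have e2 : \sum_(i < j.+2 | (0 < i)%N) cst ((-1) ^+ (i - 1)) * (Ha z i * D (H1 z (j.+1 - i))) =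
      \sum_(l < j.+2 | (0 < l)%N) beta l * (((j.+1 - l)%N)%:R * H1 z (j.+1 - l)).
    transitivity (\sum_(i < j.+2 | (0 < i)%N) \sum_(l < (j.+1 - i).+1 | (0 < l)%N)
        (cst ((-1) ^+ (i - 1)) * Ha z i) * (beta l * H1 z (j.+1 - i - l))).
      apply: eq_bigr => i hi; rewrite IH; last by move: (ltn_ord i); lia.
      by rewrite mulrA mulr_sumr.
    rewrite (tri_exchange (fun i l => (cst ((-1) ^+ (i - 1)) * Ha z i) * (beta l * H1 z (j.+1 - i - l)))); apply: eq_bigr => l hl; rewrite Newton mulr_sumr.
    apply: eq_bigr => i hi; rewrite subnAC mulrCA; congr (_ * _); by rewrite mulrA.
  rewrite e2 -big_split mulr_sumr; apply: eq_bigr => i hi.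
  have -> : ((j.+1)%:R : fps) = i%:R + ((j.+1 - i)%N)%:R.
    by rewrite -natrD subnKC // -ltnS.
  by rewrite mulrDl -[i%:R * beta i * _]mulrA [X in _ = _ + X]mulrCA.
by rewrite -[LHS]mul1r -(@nat_inv j.+1 (ltn0Sn j)) -mulrA key mulrA nat_inv ?mul1r.
Qed.


Definition uu (n jj : nat) : fps := cst (((n - 1) ^ jj)%N)%:R * (Tk jj * H1 z jj).
Definition SS (n : nat) : fps := fun q => \sum_(jj < q.+1) uu n jj q.
Definition gam (n i : nat) : fps := cst (((n - 1) ^ i)%N)%:R * (Tk i * beta i).

Lemma uuE n jj q : uu n jj q = (((n - 1) ^ jj)%N)%:R * (if (jj <= q)%N then H1 z jj (q - jj)%N else 0).
Proof. by rewrite /uu cst_mulE Tk_mulE. Qed.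

Lemma uu_ord n jj q : (q < jj)%N -> uu n jj q = 0.
Proof. by move=> h; rewrite uuE leqNgt h mulr0. Qed.

Lemma gam_ord n i q : (q < i)%N -> gam n i q = 0.
Proof. by move=> h; rewrite /gam cst_mulE Tk_mulE leqNgt h mulr0. Qed.

Lemma ca_SS n : (ca z n : fps) = cst n%:R * SS n.
Proof.
apply: funext => q; rewrite cst_mulE /ca /SS; congr (_ * _); apply: eq_bigr => jj _.
by rewrite uuE -ltnS ltn_ord.
Qed.

Lemma SS_trunc n M q : (q <= M)%N -> SS n q = (\sum_(jj < M.+1) uu n jj) q.
Proof.
move=> h; rewrite fps_sumE /SS (@sum_cut _ (fun jj => uu n jj q) q.+1 M.+1) // => i h1 h2; exact: uu_ord.
Qed.

Lemma ord_mul_eq (g X Y : fps) i m : (forall q, (q < i)%N -> g q = 0) ->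
  (forall q, (q + i <= m)%N -> X q = Y q) -> (g * X) m = (g * Y) m.
Proof.
move=> h0 hXY; rewrite !fps_mulE /psmul; apply: eq_bigr => p _.
case: (ltnP p i) => h; first by rewrite h0 // !mul0r.
by rewrite hXY //; move: (ltn_ord p); lia.
Qed.

Lemma D_uu n jj : D (uu n jj) =
  \sum_(i < k | (0 < i)%N) (if (i <= jj)%N then gam n i * uu n (jj - i) else 0).
Proof.
rewrite {1}/uu DcM ?dnat // DM DTk mul0r add0r DH1 !mulr_sumr.
rewrite (@sum_widen_cond _ (fun i => cst (((n - 1) ^ jj)%N)%:R * (Tk jj * (beta i * H1 z (jj - i))))
   (fun i => (0 < i)%N) jj.+1 (jj + k).+1); last lia.
rewrite (@sum_widen_cond _ (fun i => if (i <= jj)%N then gam n i * uu n (jj - i) else 0)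
   (fun i => (0 < i)%N) k (jj + k).+1); last lia.
apply: eq_bigr => i _.
case: (posnP i) => [->|hi] //=.
case: (leqP i jj) => hij.
  rewrite ltnS hij /=.
  case: (ltnP i k) => hik.
    rewrite /gam /uu.
    have -> : cst (((n - 1) ^ jj)%N)%:R = cst (((n-1)^i)%N)%:R * cst (((n-1)^(jj-i))%N)%:R.
      by rewrite -cstM -natrM -expnD subnKC.
    have -> : Tk jj = Tk i * Tk (jj - i) by rewrite -TkD subnKC.
    ring.
  by rewrite /beta ltnNge hik /= mul0r !mulr0.
rewrite ltnS leqNgt hij /=.
by case: (i < k)%N.
Qed.


Lemma D_ca n : D (ca z n) = (\sum_(i < k | (0 < i)%N) gam n i) * ca z n.
Proof.
rewrite ca_SS DcM ?dnat // mulrCA.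
apply: funext => m; rewrite !cst_mulE; congr (_ * _).
have -> : D (SS n) m = D (\sum_(jj < m.+1) uu n jj) m.
  by rewrite /D /psmap (@SS_trunc n m m).
rewrite Dsum; under eq_bigr => jj _ do rewrite D_uu.
rewrite exchange_big /=.
rewrite mulr_suml !fps_sumE; apply: eq_bigr => i hi.
have -> : \sum_(jj < m.+1) (if (i <= jj)%N then gam n i * uu n (jj - i) else 0) =
    gam n i * \sum_(jj < m.+1) (if (i <= jj)%N then uu n (jj - i) else 0).
  by rewrite mulr_sumr; apply: eq_bigr => jj _; case: ifP; rewrite ?mulr0.
apply: ord_mul_eq; first by move=> q; exact: gam_ord.
move=> q hq; rewrite (@sum_shift _ (uu n)); last lia.
rewrite (@SS_trunc n (m - i) q) //; lia.
Qed.


Definition lam (n : nat) : R :=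
  (- ((k%:R : rat)^-1 * ((n%:R : rat) ^+ k - 1 - (((n - 1)%N)%:R : rat) ^+ k)))%:A.

Lemma binom_id (x : rat) : (k%:R : rat) != 0 ->
  \sum_(i < k | (0 < i)%N) x ^+ i * - ((k%:R)^-1 * ('C(k, i))%:R) =
  - ((k%:R)^-1 * ((x + 1) ^+ k - 1 - x ^+ k)).
Proof.
move=> hk0; rewrite exprD1n.
case: k hk0 hk3 => [|k'] // hk0 _.
rewrite big_ord_recr /= binn mulr1n big_ord_recl /= expr0 bin0 mulr1n.
rewrite (big_mkcond (fun i : 'I_k'.+1 => (0 < i)%N)) big_ord_recl /= add0r.
have -> : \sum_(i < k') x ^+ (bump 0 i) * - ((k'.+1%:R)^-1 * ('C(k'.+1, bump 0 i))%:R) =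
   - ((k'.+1%:R)^-1 * \sum_(i < k') x ^+ (bump 0 i) *+ 'C(k'.+1, bump 0 i)).
  rewrite mulr_sumr -sumrN; apply: eq_bigr => i _.
  by rewrite -(mulr_natr (x ^+ bump 0 i)) mulrN mulrCA.
congr (- (_ * _)); rewrite addrAC addrC !addrA; ring.
Qed.


Lemma gam_sum n : (0 < n)%N -> \sum_(i < k | (0 < i)%N) gam n i = cst (lam n) * Tk k.
Proof.
move=> hn.
have e : forall i : 'I_k, gam n i =
    cst ((((n - 1) ^ i)%N)%:R * (- ((k%:R : rat)^-1 * ('C(k, i))%:R))%:A) * Tk k.
  move=> i; rewrite /gam /beta ltn_ord cstM.
  have -> : Tk k = Tk i * Tk (k - i) by rewrite -TkD subnKC // ltnW.
  ring.
under eq_bigr => i _ do rewrite e.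
rewrite -mulr_suml -(big_morph cst cstD cst0); congr (cst _ * _).
have hx : ((((n - 1)%N)%:R + 1) : rat) = n%:R by rewrite natr1 subn1 prednK.
have hk0 : (k%:R : rat) != 0 by rewrite pnatr_eq0; lia.
rewrite /lam -hx -binom_id // scaler_suml; apply: eq_bigr => i _.
have -> : ((((n - 1) ^ i)%N)%:R : R) = ((((n - 1) ^ i)%N)%:R : rat)%:A by rewrite scaler_nat.
by rewrite mulr_algl scalerA natrX.
Qed.


Lemma main_in a b : (0 < b)%N -> (b <= a)%N ->
  psmap d (binoma z a b)
  = psscale (- (k%:R : rat)^-1 *
               ((a%:R : rat) ^+ k - (b%:R : rat) ^+ k - ((a - b)%N%:R : rat) ^+ k))
            (psshift k (binoma z a b)).
Proof.
move=> hb hba.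
rewrite psscaleE psshiftE.
set Pp := \prod_(n <- iota (a - b).+1 b) (ca z n : fps).
set Qq := \prod_(n <- iota 1 b) (ca z n : fps).
have hB : (binoma z a b : fps) = Pp * psinv Qq by rewrite /binoma !psprodE !big_map.
have ca0 : forall n, ca z n 0%N = n%:R.
  by move=> n; rewrite /ca big_ord1 /= mul1r mulr1.
have hQ : Qq * psinv Qq = 1.
  apply: psinvP; rewrite /Qq prod0E; apply: unit_prod => n.
  rewrite mem_iota => /andP [h1 _]; rewrite ca0; exact: unit_nat.
have eca : forall n, (0 < n)%N -> D (ca z n) = (cst (lam n) * Tk k) * ca z n.
  by move=> n hn; rewrite D_ca gam_sum.
have hP : D Pp = (\sum_(n <- iota (a - b).+1 b) cst (lam n) * Tk k) * Pp.
  apply: D_prod => n; rewrite mem_iota => /andP [h1 _]; apply: eca; lia.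
have hQ' : D Qq = (\sum_(n <- iota 1 b) cst (lam n) * Tk k) * Qq.
  apply: D_prod => n; rewrite mem_iota => /andP [h1 _]; apply: eca; lia.
have hV := D_inv _ _ _ hQ hQ'.
change (psmap d (binoma z a b)) with (D (binoma z a b)).
rewrite hB DM hP hV.
set eP := \sum_(n <- iota (a - b).+1 b) cst (lam n) * Tk k.
set eQ := \sum_(n <- iota 1 b) cst (lam n) * Tk k.
set V := psinv Qq.
have hsum : eP - eQ = cst ((- (k%:R : rat)^-1 *
      ((a%:R : rat) ^+ k - (b%:R : rat) ^+ k - ((a - b)%N%:R : rat) ^+ k))%:A) * Tk k.
  rewrite /eP /eQ -!mulr_suml -mulrBl -!(big_morph cst cstD cst0) -cstN -cstD.
  congr (cst _ * _).
  rewrite /lam -!scaler_suml -scalerBl; congr (_ *: 1).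
  rewrite !tele subnK // add0n expr0n /=.
  have -> : (k == 0%N) = false by apply/eqP; lia.
  rewrite /=; move: ((a - b)%N%:R : rat) => y; ring.
transitivity ((eP - eQ) * (Pp * V)); first ring.
by rewrite hsum; ring.
Qed.

End Deriv.
End FPS.

Theorem mainTheorem10 (R : comUnitAlgType rat) (z : nat -> R) (d : R -> R)
    (k a b : nat)
    (hz_even : forall n, ~~ odd n -> z n = 0)
    (hdD : forall x y : R, d (x + y) = d x + d y)
    (hdZ : forall (c : rat) (x : R), d (c *: x) = c *: d x)
    (hdM : forall x y : R, d (x * y) = d x * y + x * d y)
    (hdz : forall m, odd m -> (3 <= m)%N -> d (z m) = if m == k then 1 else 0)
    (hk : odd k) (hk3 : (3 <= k)%N) (hb : (0 < b)%N) (hba : (b <= a)%N) :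
  psmap d (binoma z a b)
  = psscale (- (k%:R : rat)^-1 *
               ((a%:R : rat) ^+ k - (b%:R : rat) ^+ k - ((a - b)%N%:R : rat) ^+ k))
            (psshift k (binoma z a b)).
Proof.
by apply: main_in.
Qed.
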